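(* Let $n\geq 5$, let $S$ be the set of all $3$-cycles in $S_n$, and let $CAG_n=\mathrm{Cay}(A_n,S)$. Let $A_e$ be the set of automorphisms of $CAG_n$ that fix the identity vertex $e$ and each of its neighbours. Then $A_e=\{1\}$.
   Context: For a finite group $\Gamma$ and a subset $T\subseteq\Gamma$ with $e\notin T$ and $T=T^{-1}$, the Cayley graph $\mathrm{Cay}(\Gamma,T)$ is the undirected graph with vertex set $\Gamma$ and edge set $\{\{\gamma,t\gamma\}\mid \gamma\in\Gamma, t\in T\}$. The neighbours of $e$ in $CAG_n$ are exactly the elements of $S$. *)

(* Defs.v *)
From mathcomp Require Import all_boot all_fingroup all_solvable.
Set Implicit Arguments. Unset Strict Implicit. Unset Printing Implicit Defensive.
Local Open Scope group_scope.

Definition three_cycle (n : nat) (s : 'S_n) : Prop :=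
  exists a b c : 'I_n,
    [/\ a != b, b != c, a != c,
        [/\ s a = b, s b = c & s c = a]
      & forall x, x != a -> x != b -> x != c -> s x = x].

Definition An_vertex (n : nat) := subg_of (Alt_group 'I_n).

(* Adjacency in Cay(A_n, S): {gamma, t gamma} with t a 3-cycle, i.e.
   y = t * x with t in S, i.e. y * x^-1 in S. *)
Definition cag_adj (n : nat) (x y : An_vertex n) : Prop :=
  three_cycle (sgval y * (sgval x)^-1).

Definition cag_aut (n : nat) (g : {perm An_vertex n}) : Prop :=
  forall x y : An_vertex n, cag_adj (g x) (g y) <-> cag_adj x y.

Definition A_e (n : nat) (g : {perm An_vertex n}) : Prop :=
  [/\ cag_aut g, g 1 = 1 & forall x, cag_adj 1 x -> g x = x].

(* Main.v *)
Require Import Defs.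
From mathcomp Require Import all_boot all_fingroup all_solvable.
Set Implicit Arguments. Unset Strict Implicit. Unset Printing Implicit Defensive.
Local Open Scope group_scope.

Ltac xx := match goal with H : is_true (?x != ?x) |- _ => by rewrite eqxx in H end.

Ltac symh := repeat match goal with H : is_true (?x != ?y) |- _ =>
   lazymatch goal with
   | _ : is_true (y != x) |- _ => fail
   | _ => let H' := fresh "s" in assert (H' : y != x) by (rewrite eq_sym; exact H)
   end end.

Lemma in_seqP (T : eqType) (P : T -> Prop) (s : seq T) :
  foldr (fun w acc => P w /\ acc) True s -> forall w, w \in s -> P w.
Proof.
elim: s => //= x s IH [px ps] w; rewrite inE => /orP [/eqP -> //|]; exact: IH.
Qed.

Ltac cpt i p := let H := fresh "np" in let E := fresh "E" in
  case: (i =P p) => [E|/eqP H]; [subst i|].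

Lemma negbTE_sym (T : eqType) (x y : T) : x != y -> (y == x) = false.
Proof. by rewrite eq_sym => /negbTE. Qed.

Ltac dec1 := match goal with
 | |- context [?x == ?x] => rewrite eqxx
 | H : is_true (~~ _) |- _ => rewrite (negbTE H)
 | H : is_true (~~ _) |- _ => rewrite (negbTE_sym H)
 end.
Ltac dec := repeat (progress (dec1 || cbv iota beta)).

Section Basics.
Variable n : nat.
Implicit Types p q x y : 'S_n.

Definition hd x y := #|[set i | x i != y i]|.

Lemma hdC x y : hd x y = hd y x.
Proof. by rewrite /hd; apply: eq_card => i; rewrite !inE eq_sym. Qed.

Lemma hdxx x : hd x x = 0.
Proof. by rewrite /hd; apply/eqP; rewrite cards_eq0; apply/eqP/setP => i; rewrite !inE eqxx. Qed.

Lemma hdMr x y h : hd (x * h) (y * h) = hd x y.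
Proof. by rewrite /hd; apply: eq_card => i; rewrite !inE !permM (inj_eq (@perm_inj _ h)). Qed.

Lemma cards3 (a b c : 'I_n) : a != b -> b != c -> a != c -> #|[set a; b; c]| = 3.
Proof. by move=> ab bc ac; rewrite -setUA cardsU1 cards2 !inE negb_or ab ac bc. Qed.
Arguments cards3 {a b c}.

Lemma card3_eq (A : {set 'I_n}) : #|A| = 3 ->
  exists a b c, [/\ a != b, b != c, a != c & A = [set a; b; c]].
Proof.
move=> h3; have /card_gt2P [a [b [c [[aA bA cA] [ab bc ca]]]]] : 2 < #|A| by rewrite h3.
exists a, b, c; split => //; first by rewrite eq_sym.
apply/eqP; rewrite eq_sym eqEcard; apply/andP; split.
  by apply/subsetP => i; rewrite !inE => /orP [/orP [] | ] /eqP ->.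
by rewrite h3 cards3 // eq_sym.
Qed.

Lemma three_cycleP p : three_cycle p <-> hd 1 p = 3.
Proof.
split.
  case=> a [b [c [ab bc ac [pa pb pc] po]]].
  rewrite /hd; have -> : [set i | (1 : 'S_n) i != p i] = [set a; b; c].
    apply/setP => i; rewrite !inE perm1.
    case: (i =P a) => [->|/eqP ia]; first by rewrite pa ab.
    case: (i =P b) => [->|/eqP ib]; first by rewrite pb bc !orbT.
    case: (i =P c) => [->|/eqP ic]; first by rewrite pc !orbT (eq_sym c) ac.
    by rewrite po // eqxx.
  by rewrite cards3.
move=> /card3_eq [a [b [c [ab bc ac hA]]]].
have mv i : (p i != i) = (i \in [set a; b; c]).
  by rewrite -hA inE perm1 eq_sym.
have oth j : j != a -> j != b -> j != c -> p j = j.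
  move=> xa xb xc; apply/eqP; move: (mv j); rewrite !inE (negbTE xa) (negbTE xb) (negbTE xc) /=.
  by move/negbT; rewrite negbK.
have cl i : i \in [set a; b; c] -> p i \in [set a; b; c].
  rewrite -!mv => h; apply: contra h => /eqP h; apply/eqP; exact: perm_inj h.
have inA : a \in [set a; b; c] by rewrite !inE eqxx.
have inB : b \in [set a; b; c] by rewrite !inE eqxx orbT.
have inC : c \in [set a; b; c] by rewrite !inE eqxx !orbT.
have ha := cl _ inA; have hb := cl _ inB; have hc := cl _ inC.
rewrite -mv in inA; rewrite -mv in inB; rewrite -mv in inC.
move: inA inB inC => na nb nc.
rewrite !inE -!orbA in ha hb hc.
have pab : p a != p b by rewrite (inj_eq (@perm_inj _ p)).
have pbc : p b != p c by rewrite (inj_eq (@perm_inj _ p)).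
have pac : p a != p c by rewrite (inj_eq (@perm_inj _ p)).
case/or3P: ha => /eqP ea; rewrite ?ea in na pab pac; try xx.
- case/or3P: hb => /eqP eb; rewrite ?eb in nb pab pbc; try xx;
  case/or3P: hc => /eqP ec; rewrite ?ec in nc pbc pac; try xx.
  by exists a, b, c; split.
- case/or3P: hc => /eqP ec; rewrite ?ec in nc pbc pac; try xx;
  case/or3P: hb => /eqP eb; rewrite ?eb in nb pab pbc; try xx.
  exists a, c, b; split => //.
  by move=> j xa xc xb; apply: oth.
Qed.

Lemma adjE (x y : An_vertex n) : cag_adj x y <-> hd (sgval x) (sgval y) = 3.
Proof.
have e : hd 1 (sgval y * (sgval x)^-1) = hd (sgval x) (sgval y).
  by rewrite -(hdMr 1 _ (sgval x)) mul1g -mulgA mulVg mulg1.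
by rewrite /cag_adj -e; apply: three_cycleP.
Qed.

Definition c3 (a b c : 'I_n) : 'S_n := locked (tperm a b * tperm a c).

Lemma c3E (a b c i : 'I_n) : a != b -> b != c -> a != c ->
  c3 a b c i = if i == a then b else if i == b then c else if i == c then a else i.
Proof.
move=> ab bc ac; rewrite /c3 -lock permM.
case: (i =P a) => [->|/eqP ia]; first by rewrite tpermL tpermD // eq_sym.
case: (i =P b) => [->|/eqP ib]; first by rewrite tpermR tpermL.
case: (i =P c) => [->|/eqP ic]; first by rewrite (tpermD ac) ?tpermR // eq_sym.
by rewrite !tpermD // eq_sym.
Qed.


Lemma c3_three (a b c : 'I_n) : a != b -> b != c -> a != c -> three_cycle (c3 a b c).
Proof.
move=> ab bc ac; exists a, b, c; split => //.
  by split; rewrite c3E //; dec.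
by move=> x xa xb xc; rewrite c3E //; dec.
Qed.


Lemma hd3 (v w : 'S_n) (a b c : 'I_n) : a != b -> b != c -> a != c ->
  (forall i, (v i != w i) = [|| i == a, i == b | i == c]) -> hd v w = 3.
Proof.
move=> ab bc ac h; rewrite /hd -(cards3 ab bc ac); apply: eq_card => i.
by rewrite !inE h orbA.
Qed.

Definition cnt (ws : seq 'S_n) (y i : 'I_n) := count (fun w : 'S_n => y != w i) ws.

Lemma sum_cnt (v : 'S_n) ws : \sum_i cnt ws (v i) i = \sum_(w <- ws) hd v w.
Proof.
rewrite /cnt.
under eq_bigr => i _ do rewrite -sum1_count big_mkcond /=.
rewrite exchange_big /=; apply: eq_bigr => w _.
rewrite /hd -sum1_card [RHS]big_mkcond /=; apply: eq_bigr => i _.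
by rewrite inE.
Qed.

Lemma le_sum_eq (f g : 'I_n -> nat) : (forall i, f i <= g i) ->
  \sum_i f i = \sum_i g i -> forall i, f i = g i.
Proof.
move=> le eqs i; apply/eqP; rewrite eqn_leq le /=; rewrite leqNgt; apply/negP => lt.
have : \sum_i f i < \sum_i g i.
  rewrite (bigD1 i) //= [X in _ < X](bigD1 i) //=.
  by rewrite -addSn leq_add // leq_sum.
by rewrite eqs ltnn.
Qed.

Definition good_tests ws (v : 'S_n) (R : 'I_n -> 'I_n -> bool) :=
  forall i z : 'I_n, (cnt ws (v i) i <= cnt ws z i) && ((cnt ws z i == cnt ws (v i) i) ==> R i z).

Lemma tests_R ws (v v' : 'S_n) R :
  (forall w, w \in ws -> hd v w = 3) -> (forall w, w \in ws -> hd v' w = 3) ->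
  good_tests ws v R -> forall i, R i (v' i).
Proof.
move=> h1 h2 gt.
have eqs : \sum_i cnt ws (v i) i = \sum_i cnt ws (v' i) i.
  rewrite !sum_cnt; rewrite (eq_big_seq (fun=> 3)); last by move=> w /h1.
  by rewrite [RHS](eq_big_seq (fun=> 3)) // => w /h2.
have le i : cnt ws (v i) i <= cnt ws (v' i) i by case/andP: (gt i (v' i)).
move=> i; have := le_sum_eq le eqs i => /eqP; rewrite eq_sym => e.
by case/andP: (gt i (v' i)) => _; rewrite e.
Qed.
End Basics.

Ltac ev := rewrite ?permM ?c3E //.


Ltac allpt i k :=
  first [ match goal with p : ordinal _ |- _ =>
     (tryif constr_eq p i then fail else idtac);
     (tryif (assert (i != p) by assumption) then fail else idtac);
     cpt i p; [ (k || (match goal with |- ?G => idtac "FAILG" G end; try (match goal with H : ?T |- _ => idtac H ":" T; fail end); fail 10 "cont failed")) | allpt i k] end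
  | (k || (match goal with |- ?G => idtac "FAILGOAL" G end; try (match goal with H : ?T |- _ => idtac H ":" T; fail end); fail 10 "cont failed at end")) ].

Ltac hdset A B C := apply: (@hd3 _ _ _ A B C); [done|done|done|];
   let i := fresh "i" in intro i; ev; allpt i ltac:(dec; done).

Section C3.
Variable n : nat.

Lemma c3_rot (a b c : 'I_n) : a != b -> b != c -> a != c -> c3 a b c = c3 b c a.
Proof.
move=> ab bc ac; symh; apply/permP => i; ev; allpt i ltac:(dec; done).
Qed.

Lemma c3_sq (a b c : 'I_n) : a != b -> b != c -> a != c -> c3 a b c * c3 a b c = c3 a c b.
Proof.
move=> ab bc ac; symh; apply/permP => i; ev; allpt i ltac:(dec; done).
Qed.

Lemma c3_inv (a b c : 'I_n) : a != b -> b != c -> a != c -> c3 a b c * c3 a c b = 1.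
Proof.
move=> ab bc ac; symh; apply/permP => i; rewrite perm1; ev; allpt i ltac:(dec; done).
Qed.

Lemma c3_2b (a b c q : 'I_n) : a != b -> b != c -> a != c -> a != q -> b != q -> c != q ->
  c3 a b c * c3 a q b = c3 b c q.
Proof.
move=> *; symh; apply/permP => i; ev; allpt i ltac:(dec; done).
Qed.

Lemma three_c3 (p : 'S_n) : three_cycle p ->
  exists a b c, [/\ a != b, b != c, a != c & p = c3 a b c].
Proof.
case=> a [b [c [ab bc ac [pa pb pc] po]]]; exists a, b, c; split => //.
symh; apply/permP => i; rewrite c3E //.
cpt i a; first by rewrite pa; dec.
cpt i b; first by rewrite pb; dec.
cpt i c; first by rewrite pc; dec.
by dec; rewrite po.
Qed.

Lemma fresh4 (a b c d : 'I_n) : 4 < n -> exists y : 'I_n, [/\ a != y, b != y, c != y & d != y].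
Proof.
move=> n4.
have h : #|[set a; b; c; d]| <= 4.
  apply: leq_trans (card_size [:: a; b; c; d]).
  by apply: subset_leq_card; apply/subsetP => i; rewrite !inE -!orbA.
case: (pickP [pred y | y \notin [set a; b; c; d]]) => [y /= hy | none].
  by exists y; split; apply/negP => /eqP e; move: hy; rewrite -e !inE eqxx ?orbT.
have : #|'I_n| <= #|[set a; b; c; d]|.
  apply: subset_leq_card; apply/subsetP => i _; have := none i; rewrite /=.
  by move/negbFE.
by rewrite card_ord => /(leq_trans n4); rewrite ltnNge h.
Qed.
End C3.

Section Graph.
Variable n : nat.
Local Notation V := (An_vertex n).
Definition vx (p : 'S_n) : V := subg (Alt_group 'I_n) p.

Lemma vxK p : p \in Alt_group 'I_n -> sgval (vx p) = p.
Proof. exact: subgK. Qed.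

Lemma c3_alt (a b c : 'I_n) : a != b -> a != c -> c3 a b c \in Alt_group 'I_n.
Proof. by move=> ab ac; rewrite Alt_even /c3 -lock odd_permM !odd_tperm ab ac. Qed.

Variable G : V -> V.
Hypotheses (Ginj : injective G)
  (Gadj : forall x y, hd (sgval (G x)) (sgval (G y)) = 3 <-> hd (sgval x) (sgval y) = 3)
  (G1 : G 1 = 1) (GS : forall x, hd 1 (sgval x) = 3 -> G x = x).

Definition fixp (p : 'S_n) := G (vx p) = vx p.

Lemma fix_c3 (a b c : 'I_n) : a != b -> b != c -> a != c -> fixp (c3 a b c).
Proof.
move=> ab bc ac; apply: GS; rewrite vxK ?c3_alt //.
by apply/three_cycleP/c3_three.
Qed.

Lemma fix_tests ws v R : v \in Alt_group 'I_n -> (forall w, w \in ws -> w \in Alt_group 'I_n /\ fixp w) ->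
  (forall w, w \in ws -> hd v w = 3) -> good_tests ws v R ->
  forall i, R i (sgval (G (vx v)) i).
Proof.
move=> Av hw hv gt; apply: (tests_R hv) gt => w /[dup] wws /hw [Aw fw].
by rewrite -[w](vxK Aw) -fw; apply/Gadj; rewrite !vxK // hv.
Qed.

Lemma fix5 (a b c q r : 'I_n) : a != b -> a != c -> a != q -> a != r -> b != c -> b != q -> b != r
  -> c != q -> c != r -> q != r -> fixp (c3 a b c * c3 a q r).
Proof.
move=> ab ac aq ar bc bq br cq cr qr; symh.
pose v := c3 a b c * c3 a q r.
have Av : v \in Alt_group 'I_n by rewrite groupM // c3_alt.
set ws := [:: c3 a b c; c3 b c q; c3 c q r; c3 q r a; c3 r a b].
have hw : forall w, w \in ws -> w \in Alt_group 'I_n /\ fixp w.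
  apply: in_seqP; rewrite /=; do !split; try (apply: c3_alt; done); try (apply: fix_c3; done).
have hv : forall w, w \in ws -> hd v w = 3.
  apply: in_seqP; rewrite /= /v; do !split.
  - by hdset c q r.
  - by hdset a q r.
  - by hdset a b r.
  - by hdset a b c.
  - by hdset b c q.
have gt : good_tests ws v (fun i z => (z == v i) || (z == i)).
  move=> i; rewrite /cnt /ws /v /=; ev;
  allpt i ltac:(let z := fresh "z" in move=> z; allpt z ltac:(dec; done)).
have R := fix_tests Av hw hv gt.
move: R; set v' := sgval (G (vx v)) => R.
have va : v a = b by rewrite /v; ev; dec.
have vb : v b = c by rewrite /v; ev; dec.
have vc : v c = q by rewrite /v; ev; dec.
have vq : v q = r by rewrite /v; ev; dec.
have vr : v r = a by rewrite /v; ev; dec.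
have vo j : j != a -> j != b -> j != c -> j != q -> j != r -> v j = j.
  by move=> *; rewrite /v; ev; dec.
have inj : injective v' by apply: perm_inj.
have Ra := R a; have Rb := R b; have Rc := R c; have Rq := R q; have Rr := R r.
rewrite va in Ra; rewrite vb in Rb; rewrite vc in Rc; rewrite vq in Rq; rewrite vr in Rr.
have Ro j : j != a -> j != b -> j != c -> j != q -> j != r -> v' j = j.
  by move=> *; have := R j; rewrite vo // orbb => /eqP.
have ne x y : x != y -> v' x != v' y by move=> xy; rewrite (inj_eq inj).
case/orP: Ra => /eqP ha.
- have hb : v' b = c.
    case/orP: Rb => /eqP // e; have := ne a b ab; by rewrite ha e eqxx.
  have hc : v' c = q.
    case/orP: Rc => /eqP // e; have := ne b c bc; by rewrite hb e eqxx.
  have hq : v' q = r.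
    case/orP: Rq => /eqP // e; have := ne c q cq; by rewrite hc e eqxx.
  have hr : v' r = a.
    case/orP: Rr => /eqP // e; have := ne q r qr; by rewrite hq e eqxx.
  apply: subg_inj; rewrite vxK //; apply/permP => j; rewrite -/v'.
  cpt j a; first by rewrite ha va. cpt j b; first by rewrite hb vb.
  cpt j c; first by rewrite hc vc. cpt j q; first by rewrite hq vq.
  cpt j r; first by rewrite hr vr. by rewrite Ro // vo.
- have hr : v' r = r.
    case/orP: Rr => /eqP // e; have := ne a r ar; by rewrite ha e eqxx.
  have hq : v' q = q.
    case/orP: Rq => /eqP // e; have := ne q r qr; by rewrite hr e eqxx.
  have hc : v' c = c.
    case/orP: Rc => /eqP // e; have := ne c q cq; by rewrite hq e eqxx.
  have hb : v' b = b.
    case/orP: Rb => /eqP // e; have := ne b c bc; by rewrite hc e eqxx.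
  have v'1 : v' = 1.
    apply/permP => j; rewrite perm1.
    cpt j a; first by rewrite ha. cpt j b; first by rewrite hb.
    cpt j c; first by rewrite hc. cpt j q; first by rewrite hq.
    cpt j r; first by rewrite hr. by rewrite Ro.
  have : G (vx v) = G 1 by apply: subg_inj; rewrite G1 -/v' v'1.
  move/Ginj => /(congr1 sgval); rewrite vxK // => v1.
  by move: va; rewrite v1 perm1 => /eqP; rewrite (negbTE ab).
Qed.

Lemma fix_strict ws v : v \in Alt_group 'I_n -> (forall w, w \in ws -> w \in Alt_group 'I_n /\ fixp w) ->
  (forall w, w \in ws -> hd v w = 3) -> good_tests ws v (fun i z => z == v i) -> fixp v.
Proof.
move=> Av hw hv gt; have R := fix_tests Av hw hv gt.
apply: subg_inj; rewrite vxK //; apply/permP => j; exact/eqP/R.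
Qed.

Lemma alt5 (a b c q r : 'I_n) : a != b -> a != c -> a != q -> a != r -> (c3 a b c * c3 a q r) \in Alt_group 'I_n.
Proof. by move=> *; rewrite groupM // c3_alt. Qed.

Lemma fixDT (a b c r y : 'I_n) : a != b -> a != c -> a != r -> a != y -> b != c -> b != r -> b != y
  -> c != r -> c != y -> r != y -> fixp (c3 a b c * c3 a b r).
Proof.
move=> ab ac ar ay bc br b_y cr cy ry; symh.
apply: (@fix_strict [:: c3 a b c; c3 a b r; c3 a c r; c3 a r b * c3 a c y;
   c3 a r c * c3 a b y; c3 a r y * c3 a c b]).
- by rewrite alt5.
- apply: in_seqP; rewrite /=; do !split; try (apply: c3_alt; done); try (apply: fix_c3; done);
    try (apply: alt5; done); apply: fix5; done.
- apply: in_seqP; rewrite /=; do !split.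
  + by hdset a c r.
  + by hdset a b c.
  + by hdset a b c.
  + by hdset c r y.
  + by hdset b r y.
  + by hdset b r y.
move=> i; rewrite /cnt /=; ev;
  allpt i ltac:(let z := fresh "z" in move=> z; allpt z ltac:(dec; done)).
Qed.

Lemma fix33 (a b c p q r : 'I_n) : a != b -> a != c -> a != p -> a != q -> a != r ->
  b != c -> b != p -> b != q -> b != r -> c != p -> c != q -> c != r ->
  p != q -> p != r -> q != r -> fixp (c3 a b c * c3 p q r).
Proof.
move=> *; symh.
apply: (@fix_strict [:: c3 a b c; c3 a b p * c3 a q r; c3 a q r * c3 a p c; c3 b c r * c3 b p q]).
- by rewrite groupM // c3_alt.
- apply: in_seqP; rewrite /=; do !split; try (apply: c3_alt; done); try (apply: fix_c3; done);
    try (apply: alt5; done); apply: fix5; done.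
- apply: in_seqP; rewrite /=; do !split.
  + by hdset p q r.
  + by hdset b c r.
  + by hdset a b p.
  + by hdset a c q.
move=> i; rewrite /cnt /=; ev;
  allpt i ltac:(let z := fresh "z" in move=> z; allpt z ltac:(dec; done)).
Qed.

Lemma fix1 : fixp 1.
Proof.
have e : vx 1 = 1 by apply: subg_inj; rewrite vxK ?group1.
by rewrite /fixp e G1.
Qed.

Hypothesis n4 : 4 < n.

Lemma L2a (a b c r : 'I_n) : a != b -> a != c -> a != r -> b != c -> b != r -> c != r ->
  fixp (c3 a b c * c3 a b r).
Proof.
move=> ab ac ar bc br cr; have [y [ay b_y cy ry]] := fresh4 a b c r n4.
by apply: (@fixDT a b c r y).
Qed.

Lemma L2b (a b c q : 'I_n) : a != b -> a != c -> a != q -> b != c -> b != q -> c != q ->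
  fixp (c3 a b c * c3 a q b).
Proof. by move=> *; rewrite c3_2b //; apply: fix_c3. Qed.

Lemma KLa (a b c q r : 'I_n) : a != b -> b != c -> a != c -> a != q -> a != r -> q != r ->
  fixp (c3 a b c * c3 a q r).
Proof.
move=> ab bc ac aq ar qr; symh.
case: (b =P q) => [e|/eqP bq].
  subst q; case: (c =P r) => [e|/eqP cr].
    by subst r; rewrite c3_sq //; apply: fix_c3.
  by apply: L2a.
case: (b =P r) => [e|/eqP br].
  subst r; case: (c =P q) => [e|/eqP cq].
    by subst q; rewrite c3_inv //; apply: fix1.
  by apply: L2b => //; rewrite eq_sym.
case: (c =P q) => [e|/eqP cq].
  subst q; rewrite (c3_rot ab) // (c3_rot bc) // (c3_rot ac) //.
  by apply: L2b.
case: (c =P r) => [e|/eqP cr].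
  subst r; rewrite (c3_rot ab) // (c3_rot bc) // (c3_rot aq) // (c3_rot qr) //.
  by apply: L2a.
by apply: fix5.
Qed.

Lemma KLx (a b c p q r : 'I_n) : a != b -> b != c -> a != c -> p != q -> q != r -> p != r ->
  (a == p) || (a == q) || (a == r) -> fixp (c3 a b c * c3 p q r).
Proof.
move=> ab bc ac pq qr pr; symh.
case/orP => [/orP [] | ] /eqP e; subst a.
- by apply: KLa.
- by rewrite (c3_rot pq) //; apply: KLa.
- by rewrite (c3_rot pq) // (c3_rot qr) //; apply: KLa.
Qed.

Lemma KL (a b c p q r : 'I_n) : a != b -> b != c -> a != c -> p != q -> q != r -> p != r ->
  fixp (c3 a b c * c3 p q r).
Proof.
move=> ab bc ac pq qr pr; symh.
case: (boolP ((a == p) || (a == q) || (a == r))) => ha; first exact: KLx.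
case: (boolP ((b == p) || (b == q) || (b == r))) => hb.
  by rewrite (c3_rot ab) //; apply: KLx.
case: (boolP ((c == p) || (c == q) || (c == r))) => hc.
  by rewrite (c3_rot ab) // (c3_rot bc) //; apply: KLx.
move: ha hb hc; rewrite !negb_or => /andP [/andP [ap aq] ar] /andP [/andP [bp bq] br] /andP [/andP [cp cq] cr].
by apply: fix33.
Qed.

End Graph.

Section Gen.
Variable n : nat.
Hypothesis n4 : 4 < n.

Lemma hdMl (x y h : 'S_n) : hd (h * x) (h * y) = hd x y.
Proof.
rewrite /hd -[RHS](card_preimset _ (@perm_inj _ h)); apply: eq_card => i.
by rewrite !inE !permM.
Qed.

Lemma hdJ (x q : 'S_n) : hd 1 (x ^ q) = hd 1 x.
Proof.
have e : (1 : 'S_n) = q^-1 * 1 * q by rewrite mulg1 mulVg.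
by rewrite /conjg {1}e mulgA hdMr hdMl.
Qed.

Definition S3 := [set p : 'S_n | hd 1 p == 3].

Lemma S3_alt : S3 \subset Alt_group 'I_n.
Proof.
apply/subsetP => p; rewrite inE => /eqP /three_cycleP /three_c3 [a [b [c [ab bc ac ->]]]].
exact: c3_alt.
Qed.

Lemma S3J p : S3 :^ p = S3.
Proof. by apply/setP => x; rewrite mem_conjg !inE hdJ. Qed.

Lemma Alt_gen : Alt_group 'I_n \subset <<S3>>.
Proof.
have sHA : <<S3>> \subset Alt_group 'I_n by rewrite gen_subG S3_alt.
have nH : <<S3>>%G <| Alt_group 'I_n.
  rewrite /normal sHA /=; apply: norms_gen; apply/normsP => p _; exact: S3J.
have := simple_Alt5 (T := 'I_n); rewrite card_ord => /(_ n4) /simpleP [_ /(_ _ nH)].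
case=> [H1 | ->] //.
have n0 : 0 < n by apply: leq_trans n4.
have n1 : 1 < n by apply: leq_trans n4.
have n2 : 2 < n by apply: leq_trans n4.
pose a := Ordinal n0; pose b := Ordinal n1; pose c := Ordinal n2.
have ab : a != b by []. have bc : b != c by []. have ac : a != c by [].
have : c3 a b c \in <<S3>>.
  apply: mem_gen; rewrite inE; apply/eqP/three_cycleP; exact: c3_three.
rewrite H1 inE => /eqP /permP /(_ a); rewrite perm1 c3E //; dec.
Qed.
End Gen.


Section Main.
Variable n : nat.
Hypothesis n4 : 4 < n.
Local Notation V := (An_vertex n).

Lemma sgvM (u w : V) : sgval (u * w) = sgval u * sgval w.
Proof. by []. Qed.

Definition good (G : V -> V) := [/\ injective G,
  (forall x y, hd (sgval (G x)) (sgval (G y)) = 3 <-> hd (sgval x) (sgval y) = 3),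
  G 1 = 1 & (forall x, hd 1 (sgval x) = 3 -> G x = x)].

Lemma KLv G : good G -> forall x s : V, hd 1 (sgval x) = 3 -> hd 1 (sgval s) = 3 ->
  G (x * s) = x * s.
Proof.
case=> Ginj Gadj G1 GS x s hx hs.
move/three_cycleP/three_c3: hx => [a [b [c [ab bc ac ex]]]].
move/three_cycleP/three_c3: hs => [p [q [r [pq qr pr es]]]].
have := KL Ginj Gadj G1 GS n4 ab bc ac pq qr pr; rewrite /fixp -ex -es.
suff -> : vx (sgval x * sgval s) = x * s by [].
by rewrite -[x * s]sgvalK.
Qed.

Lemma transl G h : good G -> G h = h -> (forall u, hd 1 (sgval u) = 3 -> G (u * h) = u * h) ->
  good (fun v => G (v * h) * h^-1).
Proof.
case=> Ginj Gadj G1 GS Gh Gu; split.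
- move=> x y /= e; apply: (mulIg h); apply: Ginj; exact: (mulIg h^-1).
- by move=> x y /=; rewrite hdMr; have := Gadj (x * h) (y * h); rewrite !sgvM hdMr.
- by rewrite mul1g Gh mulgV.
- by move=> x hx /=; rewrite Gu // mulgK.
Qed.

Definition TT (G : V -> V) h := G h = h /\ forall u, hd 1 (sgval u) = 3 -> G (u * h) = u * h.

Lemma stepT G h s : good G -> TT G h -> hd 1 (sgval s) = 3 -> TT G (s * h).
Proof.
move=> gG [Gh Gu] hs; split; first exact: Gu.
move=> u hu; have e := KLv (transl gG Gh Gu) hu hs.
by rewrite mulgA; move: e => /= /(congr1 (mulg^~ h)); rewrite /= mulgKV.
Qed.

Lemma vx1 : vx 1 = 1 :> V.
Proof. by apply: subg_inj; rewrite vxK ?group1. Qed.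

Lemma allT G : good G -> forall v, G v = v.
Proof.
move=> gG v; have := subsetP (Alt_gen n4) _ (subgP v).
case/gen_prodgP => k [c hc ev].
suff : TT G (vx (\prod_i c i)) by rewrite -ev /vx sgvalK; case.
elim: k c hc {ev} => [|k IH] c hc.
  rewrite big_ord0 vx1; case: gG => _ _ G1 GS; split => // u hu.
  by rewrite mulg1 GS.
have Ac i : c i \in Alt_group 'I_n by apply: (subsetP (S3_alt n)).
rewrite big_ord_recl /vx subgM ?group_prod //.
apply: stepT => //; first by apply: IH => i; exact: hc.
rewrite subgK //.
  by move: (hc ord0); rewrite inE => /eqP.
  exact: Ac.
by move=> i _; exact: Ac.
Qed.
End Main.

Theorem lemma3p2 (n : nat) (hn : 5 <= n) :
  forall g : {perm An_vertex n}, A_e g <-> g = 1%g.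
Proof.
move=> g; split.
- case=> aut g1 gS.
  have gd : good (fun v => g v).
    split.
    + exact: perm_inj.
    + move=> x y; split => h.
        by apply/adjE; apply: (aut x y).1; apply/adjE.
      by apply/adjE; apply: (aut x y).2; apply/adjE.
    + exact: g1.
    + by move=> x hx; apply: gS; apply/adjE.
  by apply/permP => v; rewrite perm1; apply: (allT hn gd).
- move=> ->; split.
  + by move=> x y; rewrite !perm1.
  + by rewrite perm1.
  + by move=> x _; rewrite perm1.
Qed.
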